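(* Let $t$ be a record with versions $t'_1,\dots,t'_I$ and let $G'$ be its feasible sub-SUG, with layers $V'_1,\dots,V'_I$. This holds regardless of how the releases were generalized. For every $1\le i\le I$, the disclosure risk of $t'_i$ equals $1$ if and only if $|V'_i|=1$.
   Context: Data model. A microdata table is published repeatedly. Its records carry an identifier, quasi-identifier (QI) attributes and a sensitive attribute $S$ with a finite domain $\mathrm{dom}(S)$. Each published (generalized) table partitions its records, possibly including counterfeit records, into QI-groups. If a record $t$ appears in a release, its candidate sensitive set in that release is the set of sensitive values occurring in its QI-group; this set contains $t$'s actual sensitive value. The versions of $t$ are its records in the successive releases in which it appears, listed in order: $t'_1,\dots,t'_I$, with candidate sensitive sets $C_1,\dots,C_I$. Internal updates are governed by a publicly known transition probability $P_{trans}(a,b)\ge 0$ for $a,b\in\mathrm{dom}(S)$. Actual updates are feasible: $P_{trans}(t'_i[S],t'_{i+1}[S])>0$ for every $i$. Sensitive attribute update graph (SUG). The SUG of $t$ has, for each $i=1,\dots,I$, a layer $V_i=\{v_{i,s}: s\in C_i\}$ with one node per value of $C_i$. Each node has a weight $w(v_{i,s})>0$, its linking probability, and the weights in each layer sum to $1$; under the random-world assumption $w(v_{i,s})=1/|C_i|$. There is a directed edge $(v_{i,s},v_{i+1,s'})$ exactly when $P_{trans}(s,s')>0$, and its weight is $P_{trans}(s,s')$. Feasible sub-SUG. Obtain it from the SUG by repeatedly deleting a node, together with its incident edges, until no node can be deleted. A node is deleted if any of the following holds: it lies in $V_1$ and has no outgoing edge; it lies in $V_I$ and has no incoming edge; it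 lies in $V_i$ with $1<i<I$ and lacks an incoming edge or lacks an outgoing edge. When $I=1$, no node is deleted. Denote the remaining layers by $V'_i$. Disclosure risk. A feasible path is a path $p=(v'_{1,x_1},\dots,v'_{I,x_I})$ through the feasible sub-SUG with one node in each layer, where consecutive nodes are joined by edges. Its weight is $w(p)=w(v'_{I,x_I})\prod_{i=1}^{I-1} w(v'_{i,x_i})\,w(v'_{i,x_i},v'_{i+1,x_{i+1}})$. The disclosure risk of version $t'_i$ is the total weight of the feasible paths passing through the node of $V'_i$ that represents $t'_i[S]$, divided by the total weight of all feasible paths. *)

(* Defs.v *)
(* Sensitive attribute update graph (SUG), feasible sub-SUG,
   feasible paths and disclosure risk.  The record has I = n.+1 versions,
   indexed by 'I_n.+1 (version i+1 of the paper is index i here). *)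
From mathcomp Require Import all_boot all_order all_algebra.
Set Implicit Arguments. Unset Strict Implicit. Unset Printing Implicit Defensive.
Import Order.TTheory GRing.Theory Num.Theory.
Local Open Scope ring_scope.

Section SUG.
Variables (R : realFieldType) (S : finType) (n : nat).
Variable C : 'I_n.+1 -> {set S}.
Variable Ptrans : S -> S -> R.
(* node weights (linking probabilities): w i s = w(v_{i,s}) *)
Variable w : 'I_n.+1 -> S -> R.

Definition node := ('I_n.+1 * S)%type.

Definition SUG_nodes : {set node} := [set v : node | v.2 \in C v.1].

Definition sug_edge (u v : node) : bool :=
  (u.1.+1 == v.1 :> nat) && (0 < Ptrans u.2 v.2).

Definition has_out (X : {set node}) (v : node) : bool :=
  [exists u in X, sug_edge v u].
Definition has_in (X : {set node}) (v : node) : bool :=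
  [exists u in X, sug_edge u v].

(* deletion rule, relative to the current remaining node set X
   (layer V_1 is index 0, layer V_I is index n); when I = 1 nothing is deleted *)
Definition deletable (X : {set node}) (v : node) : bool :=
  [|| (v.1 == 0 :> nat) && (0 < n)%N && ~~ has_out X v,
      (v.1 == n :> nat) && (0 < n)%N && ~~ has_in X v
    | (0 < v.1 < n)%N && (~~ has_in X v || ~~ has_out X v)].

Definition delete_step (X : {set node}) : {set node} :=
  [set v in X | ~~ deletable X v].

(* repeat deletion until no node can be deleted; #|node| rounds suffice,
   since each round that is not a fixpoint removes at least one node *)
Definition feasible_nodes : {set node} :=
  iter #|{: node}| delete_step SUG_nodes.

Definition feasible_layer (i : 'I_n.+1) : {set S} :=
  [set s | (i, s) \in feasible_nodes].

Definition feasible_path (x : {ffun 'I_n.+1 -> S}) : bool :=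
  [forall i, (i, x i) \in feasible_nodes] &&
  [forall i : 'I_n, 0 < Ptrans (x (widen_ord (leqnSn n) i)) (x (lift ord0 i))].

Definition path_weight (x : {ffun 'I_n.+1 -> S}) : R :=
  w ord_max (x ord_max) *
  \prod_(i < n) (w (widen_ord (leqnSn n) i) (x (widen_ord (leqnSn n) i))
                 * Ptrans (x (widen_ord (leqnSn n) i)) (x (lift ord0 i))).

Definition disclosure_risk (i : 'I_n.+1) (a : S) : R :=
  (\sum_(x | feasible_path x && (x i == a)) path_weight x) /
  (\sum_(x | feasible_path x) path_weight x).

End SUG.

(* Main.v *)
Require Import Defs.
From mathcomp Require Import all_boot all_order all_algebra.
From mathcomp Require Import zify.
Set Implicit Arguments. Unset Strict Implicit. Unset Printing Implicit Defensive.
Import Order.TTheory GRing.Theory Num.Theory.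

Section G.
Variables (R : realFieldType) (S : finType) (n : nat) (C : 'I_n.+1 -> {set S})
  (Ptrans : S -> S -> R).
Local Notation f := (@delete_step R S n Ptrans).
Local Notation F := (feasible_nodes C Ptrans).

Lemma delete_sub X : f X \subset X.
Proof. by apply/subsetP=> v; rewrite inE => /andP[]. Qed.

Lemma iter_sub k X : iter k f X \subset X.
Proof.
elim: k => [|k IH] /=; first exact: subxx.
exact: subset_trans (delete_sub _) IH.
Qed.

Lemma fix_F : f F = F.
Proof.
rewrite /feasible_nodes.
set N := #|{: node S n}|; set X0 := SUG_nodes C.
have H : forall k, f (iter k f X0) = iter k f X0 \/ (k + #|iter k f X0| <= N)%N.
  elim=> [|k IH]; first by right; rewrite add0n max_card.
  have [E|NE] := eqVneq (f (iter k f X0)) (iter k f X0).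
    by left; rewrite /= !E.
  right; case: IH => [E|Hk]; first by rewrite E eqxx in NE.
  have : f (iter k f X0) \proper iter k f X0 by rewrite properEneq NE delete_sub.
  move/proper_card => lt; rewrite [iter k.+1 _ _]/=.
  move: lt Hk; set A := #|f _|; set B := #|iter k f X0|; lia.
case: (H N) => [//|HN].
have /eqP E0 : #|iter N f X0| == 0%N by apply/eqP; lia.
move/cards0_eq: E0 => ->.
by apply/eqP; rewrite eqEsubset delete_sub sub0set.
Qed.

Lemma F_sub : F \subset SUG_nodes C.
Proof. exact: iter_sub. Qed.

Lemma not_del (X : {set node S n}) (v : node S n) : ((v.1 < n)%N -> has_out Ptrans X v) ->
  ((0 < v.1)%N -> has_in Ptrans X v) -> ~~ deletable Ptrans X v.
Proof.
move=> ho hi; rewrite /deletable; apply/negP.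
case/or3P => [/andP[/andP[/eqP e p] no]|/andP[/andP[/eqP e p] ni]|/andP[/andP[p q] o]].
- by rewrite ho ?e in no.
- by rewrite hi ?e in ni.
- by rewrite hi // ho in o.
Qed.

Lemma del_out (X : {set node S n}) (v : node S n) : ~~ deletable Ptrans X v -> (v.1 < n)%N -> has_out Ptrans X v.
Proof.
move=> nd lt; case no: (has_out Ptrans X v) => //; move: nd; rewrite /deletable no.
case: (posnP v.1)=> [e|p].
  by rewrite e /=; rewrite e in lt; rewrite lt.
by rewrite lt /= !orbT.
Qed.

Lemma del_in (X : {set node S n}) (v : node S n) : ~~ deletable Ptrans X v -> (0 < v.1)%N -> has_in Ptrans X v.
Proof.
move=> nd p; case ni: (has_in Ptrans X v) => //; move: nd; rewrite /deletable ni.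
have := ltn_ord v.1; rewrite ltnS leq_eqVlt => /orP[/eqP e|lt].
  by rewrite e eqxx /=; rewrite e in p; rewrite p /= orbT.
by rewrite p lt /= !orbT.
Qed.

Lemma F_out (v : node S n) : v \in F -> (v.1 < n)%N -> has_out Ptrans F v.
Proof.
move=> vF; apply: del_out; move: vF; rewrite -{1}fix_F inE => /andP[].
by [].
Qed.

Lemma F_in (v : node S n) : v \in F -> (0 < v.1)%N -> has_in Ptrans F v.
Proof.
move=> vF; apply: del_in; move: vF; rewrite -{1}fix_F inE => /andP[].
by [].
Qed.

Definition nextS (k : nat) (t : S) : S :=
  odflt t [pick t' | ((inord k.+1 : 'I_n.+1), t') \in F & (0 < Ptrans t t')%R].
Definition prevS (k : nat) (t : S) : S :=
  odflt t [pick t' | ((inord k.-1 : 'I_n.+1), t') \in F & (0 < Ptrans t' t)%R].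

Lemma nextS_ok (k : 'I_n.+1) t : (k, t) \in F -> (k < n)%N ->
  ((inord k.+1, nextS k t) \in F) && (0 < Ptrans t (nextS k t))%R.
Proof.
move=> kt lt; have /existsP[[j u] /andP[ju /andP[/eqP /= e pt]]] := F_out kt lt.
rewrite /nextS; case: pickP => [t' /andP[-> ->] // | /(_ u)].
have -> : (inord k.+1 : 'I_n.+1) = j by apply/val_inj; rewrite /= inordK ?e.
by rewrite ju pt.
Qed.

Lemma prevS_ok (k : 'I_n.+1) t : (k, t) \in F -> (0 < k)%N ->
  ((inord k.-1, prevS k t) \in F) && (0 < Ptrans (prevS k t) t)%R.
Proof.
move=> kt lt; have /existsP[[j u] /andP[ju /andP[/eqP /= e pt]]] := F_in kt lt.
rewrite /prevS; case: pickP => [t' /andP[-> ->] // | /(_ u)].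
have -> : (inord k.-1 : 'I_n.+1) = j.
  by apply/val_inj; rewrite /= -e /= inordK // ltnS ltnW.
by rewrite ju pt.
Qed.

Section Path.
Variables (i : 'I_n.+1) (s : S).
Hypothesis is_F : (i, s) \in F.

Fixpoint fwd m := if m is m'.+1 then nextS (i + m') (fwd m') else s.
Fixpoint bwd m := if m is m'.+1 then prevS (i - m') (bwd m') else s.

Lemma fwd_ok m : (i + m <= n)%N -> (inord (i + m), fwd m) \in F.
Proof.
elim: m => [|m IH] le /=.
  by rewrite addn0 inord_val.
have le' : (i + m <= n)%N by lia.
have := nextS_ok (IH le').
rewrite inordK; last lia.
by rewrite -addnS => /(_ le) /andP[].
Qed.

Lemma bwd_ok m : (m <= i)%N -> (inord (i - m), bwd m) \in F.
Proof.
elim: m => [|m IH] le /=.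
  by rewrite subn0 inord_val.
have le' : (m <= i)%N by lia.
have := prevS_ok (IH le').
have hi := ltn_ord i; rewrite inordK; last lia.
by rewrite subnS subn_gt0 => /(_ le) /andP[].
Qed.

Definition xpath : {ffun 'I_n.+1 -> S} :=
  [ffun j : 'I_n.+1 => if (i <= j)%N then fwd (j - i) else bwd (i - j)].

Lemma xpath_i : xpath i = s.
Proof. by rewrite ffunE leqnn subnn. Qed.

Lemma xpath_F j : (j, xpath j) \in F.
Proof.
rewrite ffunE; case: leqP => h.
  have := fwd_ok (m := j - i); rewrite subnKC // inord_val; apply.
  by rewrite -ltnS.
have := bwd_ok (m := i - j); rewrite subKn ?inord_val; last exact: ltnW.
by apply; rewrite leq_subr.
Qed.

Lemma xpath_edge (j : 'I_n) :
  (0 < Ptrans (xpath (widen_ord (leqnSn n) j)) (xpath (lift ord0 j)))%R.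
Proof.
set J := widen_ord _ j; set K := lift ord0 j.
have vJ : val J = val j by [].
have vK : val K = (val j).+1 by [].
case: (leqP i j) => h.
  have -> : xpath K = nextS J (xpath J).
    by rewrite !ffunE vJ vK h (leq_trans h) // subSn //= subnKC.
  have := nextS_ok (xpath_F J); rewrite vJ ltn_ord => /(_ isT) /andP[_].
  by [].
have -> : xpath J = prevS K (xpath K).
  rewrite !ffunE vJ vK leqNgt h /=.
  have -> : (i - j = (i - j.+1).+1)%N by rewrite subnS prednK // subn_gt0.
  rewrite /= subKn //.
  case: leqP => h2; last by [].
  have e : (i = j.+1 :> nat) by lia.
  by rewrite e subnn.
have := prevS_ok (xpath_F K); rewrite vK => /(_ isT) /andP[_].
by [].
Qed.

Lemma xpath_feasible : feasible_path C Ptrans xpath.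
Proof.
rewrite /feasible_path; apply/andP; split; apply/forallP => j.
  exact: xpath_F.
exact: xpath_edge.
Qed.
End Path.
End G.

Unset Implicit Arguments.
Local Open Scope ring_scope.

Theorem lemma2 (R : realFieldType) (S : finType) (n : nat)
  (C : 'I_n.+1 -> {set S}) (Ptrans : S -> S -> R) (w : 'I_n.+1 -> S -> R)
  (a : 'I_n.+1 -> S) :
  (forall i, a i \in C i) ->
  (forall s s', 0 <= Ptrans s s') ->
  (forall i s, s \in C i -> 0 < w i s) ->
  (forall i, \sum_(s in C i) w i s = 1) ->
  (forall i : 'I_n, 0 < Ptrans (a (widen_ord (leqnSn n) i)) (a (lift ord0 i))) ->
  forall i : 'I_n.+1,
    disclosure_risk C Ptrans w i (a i) = 1 <-> #|feasible_layer C Ptrans i| = 1%N.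
Proof.
move=> Ha Hp Hw _ Hed i.
set F := feasible_nodes C Ptrans.
have Hedge (j k : 'I_n.+1) : j.+1 = k :> nat -> 0 < Ptrans (a j) (a k).
  move=> e; have lt : (j < n)%N by rewrite -ltnS e ltn_ord.
  have := Hed (Ordinal lt).
  have -> : widen_ord (leqnSn n) (Ordinal lt) = j by apply/val_inj.
  by have -> : lift ord0 (Ordinal lt) = k by apply/val_inj; rewrite /= /bump leq0n add1n.
have aF : forall j, (j, a j) \in F.
  rewrite /F /feasible_nodes; elim: #|_| => [|k IH] j /=.
    by rewrite inE Ha.
  rewrite inE IH /=; apply: not_del => /= h.
    apply/existsP; exists (inord j.+1, a (inord j.+1)).
    rewrite IH /sug_edge /= inordK // eqxx /=; apply: Hedge; rewrite inordK //.
  apply/existsP; exists (inord j.-1, a (inord j.-1)).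
  have hj : (j.-1 < n.+1)%N by apply: leq_ltn_trans (leq_pred _) (ltn_ord j).
  rewrite IH /sug_edge /= inordK // prednK // eqxx /=; apply: Hedge.
  by rewrite inordK // prednK.
have Wpos x : feasible_path C Ptrans x -> 0 < path_weight Ptrans w x.
  case/andP=> /forallP xF /forallP xE.
  have xC j : x j \in C j.
    by have := subsetP (F_sub C Ptrans) _ (xF j); rewrite inE.
  rewrite /path_weight mulr_gt0 ?Hw // prodr_gt0 // => j _.
  by rewrite mulr_gt0 ?Hw.
pose xa := [ffun j => a j].
have xaF : feasible_path C Ptrans xa.
  apply/andP; split; apply/forallP => j; rewrite !ffunE //.
have K : (forall x, feasible_path C Ptrans x -> x i = a i) <->
         #|feasible_layer C Ptrans i| = 1%N.
  split=> [H|H x /andP[/forallP xF _]].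
    have -> : feasible_layer C Ptrans i = [set a i].
      apply/setP => s; rewrite !inE; apply/idP/eqP => [sF|->//].
      by rewrite -(xpath_i C Ptrans i s) H // (xpath_feasible sF).
    by rewrite cards1.
  have /cards1P[z Hz] : #|feasible_layer C Ptrans i| == 1%N by rewrite H.
  have h1 : x i \in feasible_layer C Ptrans i by rewrite inE xF.
  have h2 : a i \in feasible_layer C Ptrans i by rewrite inE aF.
  by rewrite Hz !in_set1 in h1 h2; rewrite (eqP h1) (eqP h2).
rewrite -K /disclosure_risk.
set D := \sum_(x | feasible_path C Ptrans x) path_weight Ptrans w x.
have DE : D = \sum_(x | feasible_path C Ptrans x && (x i == a i)) path_weight Ptrans w x
   + \sum_(x | feasible_path C Ptrans x && ~~ (x i == a i)) path_weight Ptrans w x.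
  by rewrite /D (bigID (fun x : {ffun 'I_n.+1 -> S} => x i == a i)).
set N := \sum_(x | _ && _) _ in DE *.
set Rr := \sum_(x | _ && ~~ _) _ in DE.
have Dpos : 0 < D.
  rewrite /D (bigD1 xa) //= ltr_pwDl ?Wpos // sumr_ge0 // => x /andP[/Wpos /ltW].
  by [].
have Rr0 : Rr = 0 <-> (forall x, feasible_path C Ptrans x -> x i = a i).
  split=> [H x xF|H].
    apply/eqP; apply: contraTT isT => ne.
    have nn y : feasible_path C Ptrans y && ~~ (y i == a i) -> 0 <= path_weight Ptrans w y.
      by case/andP=> /Wpos /ltW.
    have := psumr_eq0P nn H (i := x); rewrite xF ne => /(_ isT) W0.
    by have := Wpos x xF; rewrite W0 ltxx.
  by rewrite /Rr big1 // => x /andP[/H -> ]; rewrite eqxx.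
rewrite -Rr0; split=> [E|E].
  have : N = D by move/(congr1 (fun t => t * D)): E; rewrite divfK ?mul1r // gt_eqF.
  by move=> e; apply/eqP; rewrite -(inj_eq (addrI N)) addr0 -DE e.
by rewrite E addr0 in DE; rewrite -DE divff // gt_eqF.
Qed.
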